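(* Let $p_1,\ldots,p_m\in\mathbb Z_{>0}$, $p=\operatorname{lcm}(p_1,\ldots,p_m)$, let $\alpha_1,\ldots,\alpha_m$ be words, $e_1,\ldots,e_m\in\mathbb Z_{\ge0}$, and $z,q\in\mathbb C$. Then for every positive integer $k$, \[ S(k)=\sum_{n=1}^{k}z^n n^q\prod_{j=1}^{m}\mathcal H_{\alpha_j}(p_jn)^{e_j}\in\operatorname{span}_{\mathbb C}\{\mathcal H_\beta(pk)\}_\beta, \] where $\beta$ ranges over words.
   Context: A letter is a pair $(r,s)\in\mathbb C^2$ and a word is a finite sequence of letters. For a word $\alpha=((r_1,s_1),\ldots,(r_d,s_d))$ and a positive integer $N$, \[ \mathcal H_{\alpha}(N)=\sum_{N\ge n_1>\cdots>n_d\ge1}\prod_{i=1}^{d}\frac{s_i^{n_i}}{n_i^{r_i}},\qquad \mathcal H_\emptyset(N)=1, \] with $n^r=\exp(r\log n)$ using the real logarithm. *)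

(* Defs.v *)
From Stdlib Require Import Reals List Arith.
From Coquelicot Require Import Coquelicot.
Open Scope C_scope.

Definition Cexp (z : C) : C :=
  (exp (Re z) * cos (Im z), exp (Re z) * sin (Im z))%R.

Definition npow (n : nat) (r : C) : C := Cexp (r * RtoC (ln (INR n))).

Fixpoint Cpown (s : C) (n : nat) : C :=
  match n with O => 1 | S k => s * Cpown s k end.

Fixpoint sum1 (f : nat -> C) (N : nat) : C :=
  match N with O => 0 | S M => sum1 f M + f (S M) end.

Fixpoint prod0 (f : nat -> C) (m : nat) : C :=
  match m with O => 1 | S k => prod0 f k * f k end.

Definition letter := (C * C)%type.
Definition word := list letter.

(* H_alpha(N) = sum_{N >= n_1 > ... > n_d >= 1} prod_i s_i^{n_i} / n_i^{r_i},
   computed by the recursion on the first letter: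
   H_{(r,s)::alpha}(N) = sum_{n=1}^N s^n / n^r * H_alpha(n-1). *)
Fixpoint H (alpha : word) (N : nat) : C :=
  match alpha with
  | nil => 1
  | (r, s) :: beta => sum1 (fun n => Cpown s n / npow n r * H beta (n - 1)) N
  end.

Definition lcm_list (p : nat -> nat) (m : nat) : nat :=
  fold_right Nat.lcm 1%nat (map p (seq 0 m)).

Definition Ssum (m : nat) (p : nat -> nat) (alpha : nat -> word) (e : nat -> nat)
  (z q : C) (k : nat) : C :=
  sum1 (fun n => Cpown z n * npow n q *
                 prod0 (fun j => Cpown (H (alpha j) (p j * n)) (e j)) m) k.

Definition Hcomb (l : list (C * word)) (N : nat) : C :=
  fold_right (fun cb acc => fst cb * H (snd cb) N + acc) 0 l.

(* Main.v *)
Require Import Defs.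
From Stdlib Require Import Reals List Arith Lia Lra.
From Coquelicot Require Import Coquelicot.
Open Scope C_scope.

Lemma RtoC_inj_neq (x : R) : x <> 0%R -> RtoC x <> 0.
Proof. intros H E. apply H. apply (f_equal fst) in E. exact E. Qed.

Lemma Cexp_add (a b : C) : Cexp (a + b) = Cexp a * Cexp b.
Proof.
  destruct a as [a1 a2], b as [b1 b2]. unfold Cexp, Cmult, Cplus. simpl.
  rewrite exp_plus, cos_plus, sin_plus. f_equal; ring.
Qed.

Lemma Cexp_0 : Cexp 0 = 1.
Proof. unfold Cexp. simpl. rewrite exp_0, cos_0, sin_0. apply injective_projections; simpl; ring. Qed.

Lemma Cexp_nz (z : C) : Cexp z <> 0.
Proof.
  destruct z as [a b]. unfold Cexp. simpl. intro E.
  assert (E1 := f_equal fst E). assert (E2 := f_equal snd E). simpl in E1, E2.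
  assert (He := exp_pos a). assert (Hs := sin2_cos2 b). unfold Rsqr in Hs.
  apply Rmult_integral in E1. apply Rmult_integral in E2.
  destruct E1 as [E1|E1]; [lra|]. destruct E2 as [E2|E2]; [lra|].
  rewrite E1, E2 in Hs. lra.
Qed.

Lemma Cpown_add (a : C) m n : Cpown a (m + n) = Cpown a m * Cpown a n.
Proof. induction m; simpl. ring. rewrite IHm. ring. Qed.

Lemma Cpown_mulb (a b : C) n : Cpown (a * b) n = Cpown a n * Cpown b n.
Proof. induction n; simpl. ring. rewrite IHn. ring. Qed.

Lemma Cpown_mule (a : C) m n : Cpown a (m * n) = Cpown (Cpown a m) n.
Proof. induction n; simpl. rewrite Nat.mul_0_r. reflexivity.
  rewrite Nat.mul_succ_r, Nat.add_comm, Cpown_add, IHn. ring. Qed.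

Lemma Cpown_one n : Cpown 1 n = 1.
Proof. induction n; simpl. reflexivity. rewrite IHn. ring. Qed.

Lemma Cpown_Cexp (a : C) n : Cpown (Cexp a) n = Cexp (RtoC (INR n) * a).
Proof.
  induction n; simpl Cpown.
  - simpl INR. replace (RtoC 0 * a) with (RtoC 0) by ring. now rewrite Cexp_0.
  - rewrite IHn, <- Cexp_add. f_equal. rewrite S_INR, RtoC_plus. ring.
Qed.

Lemma npow_add n a b : npow n (a + b) = npow n a * npow n b.
Proof. unfold npow. rewrite <- Cexp_add. f_equal. ring. Qed.

Lemma npow_nz n a : npow n a <> 0.
Proof. apply Cexp_nz. Qed.

Lemma npow_mul d m r : (0 < d)%nat -> (0 < m)%nat -> npow (d * m) r = npow d r * npow m r.
Proof.
  intros Hd Hm. unfold npow. rewrite <- Cexp_add. f_equal.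
  rewrite mult_INR, ln_mult, RtoC_plus. ring.
  apply lt_0_INR; lia. apply lt_0_INR; lia.
Qed.

Lemma npow_neg n q : npow n q = / npow n (- q).
Proof.
  assert (H : npow n q * npow n (-q) = 1).
  { rewrite <- npow_add. replace (q + - q) with (RtoC 0) by ring.
    unfold npow. replace (RtoC 0 * RtoC (ln (INR n))) with (RtoC 0) by ring. apply Cexp_0. }
  assert (Hn := npow_nz n (-q)).
  rewrite <- (Cmult_1_l (/ npow n (-q))). rewrite <- H. field. exact Hn.
Qed.

Lemma letter_mul s r s' r' n :
  Cpown s n / npow n r * (Cpown s' n / npow n r') = Cpown (s * s') n / npow n (r + r').
Proof.
  rewrite Cpown_mulb, npow_add. field. split; apply npow_nz.
Qed.

Lemma Cexp_surj (s : C) : s <> 0 -> exists w, Cexp w = s.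
Proof.
  destruct s as [a b]. intros Hs.
  assert (Hab : (0 < a * a + b * b)%R).
  { destruct (Req_dec a 0) as [Ha|Ha]; destruct (Req_dec b 0) as [Hb|Hb].
    - subst. exfalso. apply Hs. reflexivity.
    - nra. - nra. - nra. }
  set (rho := sqrt (a * a + b * b)).
  assert (Hr : (0 < rho)%R) by (apply sqrt_lt_R0; exact Hab).
  assert (Hr2 : (rho * rho = a * a + b * b)%R) by (apply sqrt_sqrt; lra).
  set (x := (a / rho)%R). set (y := (b / rho)%R).
  assert (Hxy : (x * x + y * y = 1)%R).
  { assert (E : (x * x + y * y = (a*a+b*b)/(rho*rho))%R) by (unfold x, y; field; lra).
    rewrite E, <- Hr2. field. lra. }
  assert (Hx : (-1 <= x <= 1)%R) by nra.
  assert (Hsq : sqrt (1 - x²) = Rabs y).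
  { rewrite <- sqrt_Rsqr_abs. f_equal. unfold Rsqr. lra. }
  destruct (Rle_or_lt 0 y) as [Hy|Hy].
  - exists (ln rho, acos x). unfold Cexp. simpl.
    rewrite exp_ln by exact Hr. rewrite cos_acos by exact Hx.
    rewrite sin_acos by exact Hx. rewrite Hsq, Rabs_right by lra.
    unfold x, y. f_equal; field; lra.
  - exists (ln rho, - acos x)%R. unfold Cexp. simpl.
    rewrite exp_ln by exact Hr. rewrite cos_neg, sin_neg, cos_acos by exact Hx.
    rewrite sin_acos by exact Hx. rewrite Hsq, Rabs_left by lra.
    unfold x, y. f_equal; field; lra.
Qed.

Lemma root_exists (s : C) d : (0 < d)%nat -> exists sg, Cpown sg d = s.
Proof.
  intros Hd. destruct (Ceq_dec s 0) as [H0|H0].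
  - exists 0. subst. destruct d; [lia|]. simpl. ring.
  - destruct (Cexp_surj s H0) as [w Hw]. exists (Cexp (w / RtoC (INR d))).
    rewrite Cpown_Cexp, <- Hw. f_equal. field. apply RtoC_inj_neq.
    apply not_0_INR. lia.
Qed.

Definition omg (d : nat) : C := Cexp (0%R, (2 * PI / INR d)%R).

Lemma omg_pow d n : Cpown (omg d) n = (cos (INR n * (2 * PI / INR d)), sin (INR n * (2 * PI / INR d))).
Proof.
  unfold omg. rewrite Cpown_Cexp.
  assert (E : RtoC (INR n) * (0%R, (2 * PI / INR d)%R) = (0%R, (INR n * (2 * PI / INR d))%R))
    by (apply injective_projections; simpl; ring).
  rewrite E. unfold Cexp. simpl. rewrite exp_0, !Rmult_1_l. reflexivity.
Qed.

Lemma omg_d d : (0 < d)%nat -> Cpown (omg d) d = 1.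
Proof.
  intros Hd. rewrite omg_pow.
  assert (Hd' : INR d <> 0%R) by (apply not_0_INR; lia).
  replace (INR d * (2 * PI / INR d))%R with (2 * PI)%R by (field; exact Hd').
  rewrite cos_2PI, sin_2PI. reflexivity.
Qed.

Lemma omg_ne d r : (0 < r < d)%nat -> Cpown (omg d) r <> 1.
Proof.
  intros Hr E. rewrite omg_pow in E.
  assert (E1 := f_equal fst E). assert (E2 := f_equal snd E). simpl in E1, E2.
  set (x := (INR r * (2 * PI / INR d))%R) in *.
  assert (Hd : (0 < INR d)%R) by (apply lt_0_INR; lia).
  assert (Hrp : (0 < INR r)%R) by (apply lt_0_INR; lia).
  assert (Hrd : (INR r < INR d)%R) by (apply lt_INR; lia).
  assert (Hpi := PI_RGT_0).
  assert (Hx : (x * INR d = 2 * PI * INR r)%R) by (unfold x; field; lra).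
  assert (Hx0 : (0 < x)%R) by nra.
  assert (Hx1 : (x < 2 * PI)%R) by nra.
  destruct (sin_eq_0_0 x E2) as [k Hk].
  rewrite Hk in Hx0, Hx1.
  assert (Hk0 : (0 < IZR k)%R) by nra.
  assert (Hk1 : (IZR k < 2)%R) by nra.
  apply lt_IZR in Hk0. apply lt_IZR in Hk1.
  assert (k = 1%Z) by lia. subst k. rewrite Hk in E1. simpl in E1.
  rewrite Rmult_1_l, cos_PI in E1. lra.
Qed.

Lemma omg_mod d M : (0 < d)%nat -> Cpown (omg d) M = Cpown (omg d) (M mod d).
Proof.
  intros Hd. rewrite (Nat.div_mod M d) at 1 by lia.
  rewrite Cpown_add, Cpown_mule, omg_d, Cpown_one by exact Hd. ring.
Qed.

Lemma sum1_S f N : sum1 f (S N) = sum1 f N + f (S N).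
Proof. reflexivity. Qed.

Lemma sum1_ext f g N : (forall n, (1 <= n)%nat -> f n = g n) -> sum1 f N = sum1 g N.
Proof. intros H. induction N; simpl. reflexivity. rewrite IHN, H by lia. reflexivity. Qed.

Lemma sum1_add f g N : sum1 (fun n => f n + g n) N = sum1 f N + sum1 g N.
Proof. induction N; simpl. ring. rewrite IHN. ring. Qed.

Lemma sum1_scal c f N : sum1 (fun n => c * f n) N = c * sum1 f N.
Proof. induction N; simpl. ring. rewrite IHN. ring. Qed.

Lemma sum1_scalr c f N : sum1 (fun n => f n * c) N = sum1 f N * c.
Proof. induction N; simpl. ring. rewrite IHN. ring. Qed.

Lemma sum1_swap (A : nat -> nat -> C) N d :
  sum1 (fun M => sum1 (fun j => A j M) d) N = sum1 (fun j => sum1 (fun M => A j M) N) d.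
Proof.
  induction N; simpl.
  - induction d; simpl. reflexivity. rewrite <- IHd. ring.
  - rewrite IHN. rewrite <- sum1_add. reflexivity.
Qed.

Lemma geom x n : (x - 1) * sum1 (fun j => Cpown x j) n = x * Cpown x n - x.
Proof. induction n; simpl. ring. rewrite Cmult_plus_distr_l, IHn. ring. Qed.

Lemma geom0 x d : Cpown x d = 1 -> x <> 1 -> sum1 (fun j => Cpown x j) d = 0.
Proof.
  intros H1 H2. assert (E := geom x d). rewrite H1 in E.
  assert (Hx : x - 1 <> 0) by (intro E'; apply H2; rewrite <- (Cplus_0_l 1), <- E'; ring).
  replace (sum1 (fun j => Cpown x j) d) with (((x - 1) * sum1 (fun j => Cpown x j) d) / (x - 1))
    by (field; exact Hx).
  rewrite E. field. exact Hx.
Qed.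

Lemma geom1 d : sum1 (fun j => Cpown 1 j) d = RtoC (INR d).
Proof. induction d; simpl sum1. reflexivity. rewrite IHd, ?Cpown_one, S_INR, RtoC_plus. ring. Qed.

Definition Sp (g : nat -> C) : Prop := exists l, forall N, g N = Hcomb l N.

Lemma Sp_ext f g : (forall N, f N = g N) -> Sp f -> Sp g.
Proof. intros E [l Hl]. exists l. intros N. rewrite <- E. apply Hl. Qed.

Lemma Sp_H b : Sp (H b).
Proof. exists ((RtoC 1, b) :: nil). intros N. simpl. ring. Qed.

Lemma Sp_const c : Sp (fun _ => c).
Proof. exists ((c, nil) :: nil). intros N. simpl. ring. Qed.

Lemma Hcomb_app l1 l2 N : Hcomb (l1 ++ l2) N = Hcomb l1 N + Hcomb l2 N.
Proof. induction l1 as [|[c b] l1 IH]; simpl. ring. rewrite IH. ring. Qed.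

Lemma Sp_add f g : Sp f -> Sp g -> Sp (fun N => f N + g N).
Proof.
  intros [l1 H1] [l2 H2]. exists (l1 ++ l2). intros N. rewrite Hcomb_app, H1, H2. reflexivity.
Qed.

Lemma Sp_scal c f : Sp f -> Sp (fun N => c * f N).
Proof.
  intros [l Hl]. exists (map (fun cb => (c * fst cb, snd cb)) l). intros N. rewrite Hl.
  clear Hl. induction l as [|[c' b] l IH]; simpl. ring. rewrite <- IH. ring.
Qed.

Lemma Sp_sum1 (f : nat -> nat -> C) d : (forall j, Sp (f j)) -> Sp (fun N => sum1 (fun j => f j N) d).
Proof.
  intros Hf. induction d; simpl.
  - apply Sp_const.
  - apply (Sp_add _ _ IHd (Hf (S d))).
Qed.

Definition LS (r s : C) (g : nat -> C) (N : nat) : C :=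
  sum1 (fun n => Cpown s n / npow n r * g (n - 1)%nat) N.
Definition LS0 (r s : C) (g : nat -> C) (N : nat) : C :=
  sum1 (fun n => Cpown s n / npow n r * g n) N.

Lemma LS_ext r s f g N : (forall n, f n = g n) -> LS r s f N = LS r s g N.
Proof. intros E. unfold LS. apply sum1_ext. intros n _. rewrite E. reflexivity. Qed.
Lemma LS0_ext r s f g N : (forall n, f n = g n) -> LS0 r s f N = LS0 r s g N.
Proof. intros E. unfold LS0. apply sum1_ext. intros n _. rewrite E. reflexivity. Qed.

Lemma LS_lin r s c f g N : LS r s (fun n => c * f n + g n) N = c * LS r s f N + LS r s g N.
Proof. unfold LS. rewrite <- sum1_scal, <- sum1_add. apply sum1_ext. intros. ring. Qed.
Lemma LS0_lin r s c f g N : LS0 r s (fun n => c * f n + g n) N = c * LS0 r s f N + LS0 r s g N.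
Proof. unfold LS0. rewrite <- sum1_scal, <- sum1_add. apply sum1_ext. intros. ring. Qed.

Lemma LS_zero r s N : LS r s (fun _ => 0) N = 0.
Proof. unfold LS. induction N; simpl. reflexivity. rewrite IHN. ring. Qed.
Lemma LS0_zero r s N : LS0 r s (fun _ => 0) N = 0.
Proof. unfold LS0. induction N; simpl. reflexivity. rewrite IHN. ring. Qed.

Lemma Sp_LS_gen (T : (nat -> C) -> nat -> C) :
  (forall f g N, (forall n, f n = g n) -> T f N = T g N) ->
  (forall c f g N, T (fun n => c * f n + g n) N = c * T f N + T g N) ->
  (forall N, T (fun _ => 0) N = 0) ->
  (forall b, Sp (T (H b))) ->
  forall g, Sp g -> Sp (T g).
Proof.
  intros Text Tlin T0 TH g [l Hl].
  apply Sp_ext with (f := T (Hcomb l)).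
  { intros N. apply Text. intros n. symmetry. apply Hl. }
  clear Hl. induction l as [|[c b] l IH].
  - apply Sp_ext with (f := fun _ => 0). intros N. symmetry. apply T0. apply Sp_const.
  - apply Sp_ext with (f := fun N => c * T (H b) N + T (Hcomb l) N).
    + intros N. symmetry. apply Tlin.
    + apply Sp_add. apply Sp_scal. apply TH. exact IH.
Qed.

Lemma Sp_LS r s g : Sp g -> Sp (LS r s g).
Proof.
  apply Sp_LS_gen. apply LS_ext. apply LS_lin. apply LS_zero.
  intros b. apply Sp_H with (b := (r, s) :: b).
Qed.

Lemma H_cons r s b N : H ((r, s) :: b) N = sum1 (fun n => Cpown s n / npow n r * H b (n - 1)%nat) N.
Proof. reflexivity. Qed.

Lemma H_cons_S r s b N : H ((r, s) :: b) (S N) = H ((r, s) :: b) N + Cpown s (S N) / npow (S N) r * H b N.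
Proof. rewrite !H_cons, sum1_S. simpl Nat.sub. rewrite Nat.sub_0_r. reflexivity. Qed.

Lemma Sp_LS0 r s g : Sp g -> Sp (LS0 r s g).
Proof.
  apply Sp_LS_gen. apply LS0_ext. apply LS0_lin. apply LS0_zero.
  intros b. destruct b as [|[r' s'] b].
  - apply Sp_ext with (f := H ((r, s) :: nil)). intros N. reflexivity. apply Sp_H.
  - apply Sp_ext with (f := fun N => H ((r, s) :: (r', s') :: b) N + H ((r + r', s * s') :: b) N).
    + intros N. unfold LS0. rewrite !H_cons.
      rewrite <- sum1_add. apply sum1_ext. intros n Hn.
      destruct n as [|n]; [lia|]. rewrite H_cons_S. simpl Nat.sub. rewrite Nat.sub_0_r.
      rewrite <- letter_mul. ring.
    + apply Sp_add; apply Sp_H.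
Qed.

Lemma H_nil N : H nil N = 1.
Proof. reflexivity. Qed.

Lemma H_mul a b : Sp (fun N => H a N * H b N).
Proof.
  revert b. induction a as [|[r1 s1] a IHa]; intros b.
  - apply Sp_ext with (f := H b). intros N. cbv beta. rewrite (H_nil N). rewrite ?Cmult_1_l, ?Cmult_1_r. reflexivity. apply Sp_H.
  - induction b as [|[r2 s2] b IHb].
    + apply Sp_ext with (f := H ((r1, s1) :: a)). intros N. cbv beta. rewrite (H_nil N). rewrite ?Cmult_1_l, ?Cmult_1_r. reflexivity. apply Sp_H.
    + set (A := H ((r1, s1) :: a)). set (B := H ((r2, s2) :: b)).
      apply Sp_ext with (f := fun N => LS r1 s1 (fun n => H a n * B n) N
                                     + LS r2 s2 (fun n => A n * H b n) N
                                     + LS (r1 + r2) (s1 * s2) (fun n => H a n * H b n) N).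
      * intros N. cbv beta. induction N.
        -- unfold LS, A, B. simpl. ring.
        -- assert (EA : A (S N) = A N + Cpown s1 (S N) / npow (S N) r1 * H a N).
           { unfold A. apply H_cons_S. }
           assert (EB : B (S N) = B N + Cpown s2 (S N) / npow (S N) r2 * H b N).
           { unfold B. apply H_cons_S. }
           cbv beta in *.
           change (H ((r1, s1) :: a)) with A in IHN |- *. change (H ((r2, s2) :: b)) with B in IHN |- *.
           replace (A (S N) * B (S N)) with (A N * B N +
              (Cpown s1 (S N) / npow (S N) r1 * (H a N * B N)
               + Cpown s2 (S N) / npow (S N) r2 * (A N * H b N)
               + Cpown s1 (S N) / npow (S N) r1 * (Cpown s2 (S N) / npow (S N) r2) * (H a N * H b N)))
             by (rewrite EA, EB; ring).
           rewrite <- IHN. unfold LS. rewrite !sum1_S.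
           simpl Nat.sub. rewrite !Nat.sub_0_r.
           rewrite <- letter_mul. ring.
      * apply Sp_add. apply Sp_add.
        -- apply Sp_LS. apply IHa.
        -- apply Sp_LS. exact IHb.
        -- apply Sp_LS. apply IHa.
Qed.

Lemma Sp_mul f g : Sp f -> Sp g -> Sp (fun N => f N * g N).
Proof.
  intros [l1 H1] [l2 H2].
  apply Sp_ext with (f := fun N => Hcomb l1 N * Hcomb l2 N).
  { intros N. rewrite H1, H2. reflexivity. }
  clear H1 H2. induction l1 as [|[c b] l1 IH].
  - apply Sp_ext with (f := fun _ => 0). intros N. simpl. ring. apply Sp_const.
  - apply Sp_ext with (f := fun N => c * (H b N * Hcomb l2 N) + Hcomb l1 N * Hcomb l2 N).
    { intros N. simpl. ring. }
    apply Sp_add; [apply Sp_scal|exact IH].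
    clear IH. induction l2 as [|[c' b'] l2 IH2].
    + apply Sp_ext with (f := fun _ => 0). intros N. simpl. ring. apply Sp_const.
    + apply Sp_ext with (f := fun N => c' * (H b N * H b' N) + H b N * Hcomb l2 N).
      { intros N. simpl. ring. }
      apply Sp_add; [apply Sp_scal; apply H_mul | exact IH2].
Qed.

Lemma Sp_pow f e : Sp f -> Sp (fun N => Cpown (f N) e).
Proof.
  intros Hf. induction e.
  - apply Sp_ext with (f := fun _ => 1). intros; reflexivity. apply Sp_const.
  - apply Sp_ext with (f := fun N => f N * Cpown (f N) e). intros N. reflexivity.
    apply Sp_mul; assumption.
Qed.

Definition fil (d : nat) (s r : C) (M : nat) : C :=
  if (M mod d =? 0)%nat then Cpown s (M / d)%nat / npow (M / d)%nat r else 0.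

Lemma fil_id d s r : (0 < d)%nat -> exists k w sg, forall M, (1 <= M)%nat ->
  fil d s r M = sum1 (fun j => k * (Cpown (Cpown w j * sg) M / npow M r)) d.
Proof.
  intros Hd. destruct (root_exists s d Hd) as [sg Hsg].
  exists (npow d r / RtoC (INR d)), (omg d), sg. intros M HM.
  rewrite (sum1_ext _ (fun j => (npow d r / RtoC (INR d) * Cpown sg M / npow M r) * Cpown (Cpown (omg d) M) j)).
  2:{ intros j _. rewrite Cpown_mulb, <- !Cpown_mule, Nat.mul_comm. unfold Cdiv. ring. }
  rewrite sum1_scal.
  assert (HdR : RtoC (INR d) <> 0) by (apply RtoC_inj_neq; apply not_0_INR; lia).
  unfold fil. destruct (Nat.eqb_spec (M mod d) 0) as [E|E].
  - set (m := (M / d)%nat).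
    assert (EM : M = (d * m)%nat) by (unfold m; rewrite (Nat.div_mod M d) at 1 by lia; lia).
    assert (Hm : (0 < m)%nat) by (destruct m; lia).
    rewrite (omg_mod d M Hd), E. simpl Cpown at 2.
    rewrite geom1. rewrite EM at 1 2. rewrite Cpown_mule, Hsg, npow_mul by lia.
    field. repeat split; try apply npow_nz; exact HdR.
  - rewrite geom0. ring.
    + rewrite <- Cpown_mule, Nat.mul_comm, Cpown_mule, omg_d, Cpown_one by exact Hd. reflexivity.
    + rewrite (omg_mod d M Hd). apply omg_ne. split. lia. apply Nat.mod_upper_bound. lia.
Qed.

Lemma Sp_fil_gen d s r (g : nat -> C) (sh : nat) : (0 < d)%nat ->
  (forall w, Sp (fun N => sum1 (fun n => Cpown w n / npow n r * g (n - sh)%nat) N)) ->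
  Sp (fun N => sum1 (fun M => fil d s r M * g (M - sh)%nat) N).
Proof.
  intros Hd HL. destruct (fil_id d s r Hd) as [k [w [sg Hk]]].
  apply Sp_ext with (f := fun N => sum1 (fun j => k * sum1 (fun n => Cpown (Cpown w j * sg) n / npow n r * g (n - sh)%nat) N) d).
  - intros N. symmetry.
    transitivity (sum1 (fun M => sum1 (fun j => k * (Cpown (Cpown w j * sg) M / npow M r * g (M - sh)%nat)) d) N).
    { apply sum1_ext. intros M HM. rewrite Hk by exact HM. rewrite <- sum1_scalr.
      apply sum1_ext. intros. ring. }
    rewrite sum1_swap. apply sum1_ext. intros j _. rewrite <- sum1_scal. reflexivity.
  - apply Sp_sum1. intros j. apply Sp_scal. apply HL.
Qed.

Lemma Sp_fil d s r g : (0 < d)%nat -> Sp g -> Sp (fun N => sum1 (fun M => fil d s r M * g (M - 1)%nat) N).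
Proof. intros Hd Hg. apply Sp_fil_gen. exact Hd. intros w. apply (Sp_LS r w g Hg). Qed.

Lemma Sp_fil0 d s r g : (0 < d)%nat -> Sp g -> Sp (fun N => sum1 (fun M => fil d s r M * g M) N).
Proof.
  intros Hd Hg. apply Sp_ext with (f := fun N => sum1 (fun M => fil d s r M * g (M - 0)%nat) N).
  { intros N. apply sum1_ext. intros. rewrite Nat.sub_0_r. reflexivity. }
  apply Sp_fil_gen. exact Hd. intros w.
  apply Sp_ext with (f := LS0 r w g). intros N. unfold LS0. apply sum1_ext. intros. rewrite Nat.sub_0_r. reflexivity.
  apply (Sp_LS0 r w g Hg).
Qed.

Lemma sum_filter d (f : nat -> C) : (0 < d)%nat -> (forall M, (M mod d <> 0)%nat -> f M = 0) ->
  forall n c, (c < d)%nat -> sum1 f (d * n + c)%nat = sum1 (fun m => f (d * m)%nat) n.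
Proof.
  intros Hd Hf.
  assert (A : forall n c, (c < d)%nat -> sum1 f (d * n + c)%nat = sum1 f (d * n)%nat).
  { intros n c. induction c; intros Hc.
    - rewrite Nat.add_0_r. reflexivity.
    - rewrite Nat.add_succ_r, sum1_S, IHc by lia. rewrite Hf. ring.
      replace (S (d * n + c)) with (S c + n * d)%nat by lia.
      rewrite Nat.Div0.mod_add, Nat.mod_small by lia. lia. }
  assert (B : forall n, sum1 f (d * n)%nat = sum1 (fun m => f (d * m)%nat) n).
  { induction n.
    - rewrite Nat.mul_0_r. reflexivity.
    - replace (d * S n)%nat with (S (d * n + (d - 1)))%nat at 1 by lia.
      rewrite sum1_S, A, IHn, sum1_S by lia.
      replace (S (d * n + (d - 1)))%nat with (d * S n)%nat by lia. reflexivity. }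
  intros n c Hc. rewrite A by exact Hc. apply B.
Qed.

Lemma scale a d : (0 < d)%nat -> forall c, (c < d)%nat ->
  exists G, Sp G /\ forall n, G (d * n + c)%nat = H a n.
Proof.
  intros Hd. induction a as [|[r s] b IH]; intros c Hc.
  - exists (fun _ => 1). split. apply Sp_const. intros n. reflexivity.
  - destruct (IH (d - 1)%nat ltac:(lia)) as [Gb [HGb EGb]].
    exists (fun N => sum1 (fun M => fil d s r M * Gb (M - 1)%nat) N). split.
    + apply Sp_fil; assumption.
    + intros n. cbv beta.
      assert (Hz : forall M, (M mod d <> 0)%nat -> fil d s r M * Gb (M - 1)%nat = 0).
      { intros M HM. unfold fil. destruct (Nat.eqb_spec (M mod d) 0); [contradiction|ring]. }
      rewrite (sum_filter d _ Hd Hz n c Hc).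
      rewrite H_cons. apply sum1_ext. intros m Hm.
      unfold fil. rewrite (Nat.mul_comm d m), Nat.Div0.mod_mul. simpl Nat.eqb. cbv iota.
      rewrite Nat.div_mul by lia.
      replace (m * d - 1)%nat with (d * (m - 1) + (d - 1))%nat by nia.
      rewrite EGb. reflexivity.
Qed.

Lemma lcm_fold (l : list nat) : (forall x, In x l -> (0 < x)%nat) ->
  (0 < fold_right Nat.lcm 1%nat l)%nat /\ forall x, In x l -> Nat.divide x (fold_right Nat.lcm 1%nat l).
Proof.
  induction l as [|a l IH]; intros Hl; simpl.
  - split. lia. intros x [].
  - destruct IH as [IH1 IH2]. intros x Hx; apply Hl; right; exact Hx.
    split.
    + assert (Ha : (0 < a)%nat) by (apply Hl; left; reflexivity).
      destruct (Nat.eq_dec (Nat.lcm a (fold_right Nat.lcm 1%nat l)) 0) as [E|E].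
      * apply Nat.lcm_eq_0 in E. lia.
      * lia.
    + intros x [Hx|Hx].
      * subst. apply Nat.divide_lcm_l.
      * eapply Nat.divide_trans. apply IH2. exact Hx. apply Nat.divide_lcm_r.
Qed.

Theorem theorem6p1 (m : nat) (p : nat -> nat) (alpha : nat -> word)
  (e : nat -> nat) (z q : C) :
  (forall j, (j < m)%nat -> (0 < p j)%nat) ->
  exists l : list (C * word),
    forall k : nat, (0 < k)%nat ->
      Ssum m p alpha e z q k = Hcomb l (lcm_list p m * k).
Proof.
  intros Hp. set (P := lcm_list p m).
  destruct (lcm_fold (map p (seq 0 m))) as [HP0 HPd].
  { intros x Hx. apply in_map_iff in Hx. destruct Hx as [j [Hj Hin]]. subst x.
    apply in_seq in Hin. apply Hp. lia. }
  fold (lcm_list p m) in HP0, HPd. fold P in HP0, HPd.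
  assert (Hj : forall j, (j < m)%nat -> exists Gj, Sp Gj /\ forall n, H (alpha j) (p j * n)%nat = Gj (P * n)%nat).
  { intros j Hjm. destruct (HPd (p j)) as [dj Hdj].
    { apply in_map. apply in_seq. lia. }
    assert (Hdj0 : (0 < dj)%nat) by (destruct dj; lia).
    destruct (scale (alpha j) dj Hdj0 0 Hdj0) as [G [HG EG]].
    exists G. split. exact HG. intros n. rewrite <- EG. f_equal. rewrite Hdj. nia. }
  assert (Hprod : forall m', (m' <= m)%nat -> exists G, Sp G /\ forall n,
             prod0 (fun j => Cpown (H (alpha j) (p j * n)%nat) (e j)) m' = G (P * n)%nat).
  { induction m' as [|m' IH]; intros Hm'.
    - exists (fun _ => 1). split. apply Sp_const. intros n. reflexivity.
    - destruct (IH ltac:(lia)) as [G [HG EG]].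
      destruct (Hj m' ltac:(lia)) as [Gj [HGj EGj]].
      exists (fun N => G N * Cpown (Gj N) (e m')). split.
      + apply Sp_mul. exact HG. apply Sp_pow. exact HGj.
      + intros n. simpl prod0. rewrite EG, EGj. reflexivity. }
  destruct (Hprod m (le_n m)) as [G [HG EG]].
  destruct (Sp_fil0 P z (-q) G HP0 HG) as [l Hl].
  exists l. intros k _. rewrite <- Hl. unfold Ssum.
  assert (Hz : forall M, (M mod P <> 0)%nat -> fil P z (-q) M * G M = 0).
  { intros M HM. unfold fil. destruct (Nat.eqb_spec (M mod P) 0); [contradiction|ring]. }
  replace (P * k)%nat with (P * k + 0)%nat by lia.
  rewrite (sum_filter P _ HP0 Hz k 0 HP0).
  apply sum1_ext. intros n Hn. rewrite EG.
  unfold fil. rewrite (Nat.mul_comm P n), Nat.Div0.mod_mul. simpl Nat.eqb. cbv iota.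
  rewrite Nat.div_mul by lia. rewrite (npow_neg n q). unfold Cdiv. reflexivity.
Qed.
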